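(* Let $a>1$ and $\mu_1\in(0,1]$ be constants. Let $n$ be sufficiently large and $d\ge n$. Let $X,Y\in\{0,1\}^d$ be independent and uniform, and let $X'=\mathrm{BSC}_{\frac{1-\rho}{2}}(X)$ with $\rho=\sqrt{\frac{2\ln(a\mu_1 n)-\ln\ln n}{d}}$. There exists a constant $\alpha_1>0$ such that $$\Pr\left[\max\{d_H(X,Y),d_H(X',Y)\}\le\frac d2-\frac{3\rho d}{8}\right]\le(\mu_1 n)^{-(1+\alpha_1)}.$$
   Context: $\mathrm{BSC}_p(x)$ denotes the output of the binary symmetric channel on input $x$: each bit of $x$ is flipped independently with probability $p$. $d_H$ denotes Hamming distance. *)

(* Defs.v *)
From HB Require Import structures.
From mathcomp Require Import all_boot all_order all_algebra.
From mathcomp Require Import all_classical all_reals.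
From mathcomp Require Import exp.
Set Implicit Arguments. Unset Strict Implicit. Unset Printing Implicit Defensive.
Import Order.TTheory GRing.Theory Num.Theory.
Local Open Scope ring_scope.

Definition word (d : nat) := {ffun 'I_d -> bool}.

Definition dH (d : nat) (x y : word d) : nat := #|[set i | x i != y i]|.

Section Prob.
Variable R : realType.

(* Pr[ BSC_p(x) = z ] : each bit flipped independently with probability p *)
Definition bsc_prob (d : nat) (p : R) (x z : word d) : R :=
  p ^+ dH x z * (1 - p) ^+ (d - dH x z).

(* Pr[ E(X, X', Y) ] where X, Y are independent uniform on {0,1}^d and
   X' = BSC_p(X) (channel noise independent of Y). *)
Definition prob_XXY (d : nat) (p : R) (E : word d -> word d -> word d -> bool) : R :=
  \sum_(x : word d) \sum_(y : word d) \sum_(z : word d)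
     (2 ^- d) * (2 ^- d) * bsc_prob p x z * (E x z y)%:R.

Definition rho_of (a mu1 : R) (n d : nat) : R :=
  Num.sqrt ((2 * ln (a * mu1 * n%:R) - ln (ln n%:R)) / d%:R).
End Prob.

(* Main.v *)
Require Import Defs.
From HB Require Import structures.
From mathcomp Require Import all_boot all_order all_algebra.
From mathcomp Require Import all_classical all_reals.
From mathcomp Require Import sequences exp.
From mathcomp Require Import ring lra.
Import Order.TTheory GRing.Theory Num.Theory.
Local Open Scope ring_scope.

Section H.
Variable R : realType.

Lemma prod_if d (c : 'I_d -> bool) (u v : R) :
  \prod_(i < d) (if c i then u else v) =
  u ^+ #|[set i | c i]| * v ^+ (d - #|[set i | c i]|).
Proof.
rewrite (bigID c) /=.
rewrite (eq_bigr (fun=> u)); last by move=> i ->.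
rewrite [X in _ * X](eq_bigr (fun=> v)); last by move=> i /negbTE ->.
rewrite !prodr_const; congr (_ ^+ _ * _ ^+ _).
  by apply: eq_card => i; rewrite inE.
rewrite (_ : (d - _)%N = #|~: [set i | c i]|); last first.
  apply/eqP; rewrite -(eqn_add2l #|[set i | c i]|) cardsC card_ord subnKC //.
  by rewrite -[X in (_ <= X)%N]card_ord max_card.
apply: eq_card => i.
by rewrite !inE.
Qed.

Lemma fact_sum d (F : 'I_d -> bool -> R) :
  \sum_(x : word d) \prod_(i < d) F i (x i) = \prod_(i < d) \sum_(b : bool) F i b.
Proof. by rewrite bigA_distr_bigA. Qed.


Lemma dH_le d (x y : word d) : (dH x y <= d)%N.
Proof. by rewrite /dH -[X in (_ <= X)%N]card_ord max_card. Qed.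

Lemma exp_pow2 d k (l : R) : (k <= d)%N ->
  expR (- l) ^+ k * expR l ^+ (d - k) = expR (l * (d%:R - 2 * k%:R)).
Proof.
move=> hk; rewrite -!expRM_natr -expRD; congr expR; rewrite natrB //; ring.
Qed.

Lemma chernoff d (p lam c : R) (E : word d -> word d -> word d -> bool)
  (hp0 : 0 <= p) (hp1 : p <= 1) (hl : 0 <= lam)
  (hE : forall x z y, E x z y ->
     c <= lam * ((d%:R - 2 * (dH x y)%:R) + (d%:R - 2 * (dH z y)%:R))) :
  prob_XXY p E <= expR (- c) *
     (p + (1 - p) * (expR lam ^+ 2 + expR (- lam) ^+ 2) / 2) ^+ d.
Proof.
pose f (a b z : bool) := 4^-1 * (if a != z then p else 1 - p) *
   (if a != b then expR (- lam) else expR lam) *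
   (if z != b then expR (- lam) else expR lam).
have step : forall x y z : word d,
  2^-d * 2^-d * bsc_prob p x z * (E x z y)%:R <=
  expR (- c) * \prod_(i < d) f (x i) (y i) (z i).
  move=> x y z.
  have -> : expR (- c) * \prod_(i < d) f (x i) (y i) (z i) =
    2^-d * 2^-d * bsc_prob p x z *
    expR (lam * ((d%:R - 2 * (dH x y)%:R) + (d%:R - 2 * (dH z y)%:R)) - c).
    rewrite /f !big_split /= !prod_if prodr_const card_ord.
    rewrite !exp_pow2 ?dH_le //.
    have -> : (4^-1 : R) ^+ d = 2^-d * 2^-d.
      by rewrite exprVn -invfM -exprMn; congr (_ ^- _); ring.
    rewrite /bsc_prob.
    rewrite [in RHS](_ : expR _ = expR (lam * (d%:R - 2 * (dH x y)%:R)) *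
       expR (lam * (d%:R - 2 * (dH z y)%:R)) * expR (- c)); last first.
      rewrite -!expRD; congr expR; ring.
    have e1 : #|[set i | x i != z i]| = dH x z by [].
    have e2 : #|[set i | x i != y i]| = dH x y by [].
    have e3 : #|[set i | z i != y i]| = dH z y by [].
    rewrite e1 e2 e3. ring.
  have w0 : 0 <= 2^-d * 2^-d * bsc_prob p x z.
    rewrite /bsc_prob !mulr_ge0 // ?invr_ge0 ?exprn_ge0 // subr_ge0 //.
  apply: ler_wpM2l => //.
  case: (boolP (E x z y)) => hxy /=.
    have := hE _ _ _ hxy => h.
    have := expR_ge1Dx (lam * (d%:R - 2 * (dH x y)%:R + (d%:R - 2 * (dH z y)%:R)) - c).
    lra.
  exact: expR_ge0.
apply: le_trans (_ : \sum_(x : word d) \sum_(y : word d) \sum_(z : word d)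
   expR (- c) * \prod_(i < d) f (x i) (y i) (z i) <= _).
  by apply: ler_sum => x _; apply: ler_sum => y _; apply: ler_sum => z _; exact: step.
rewrite le_eqVlt; apply/orP; left; apply/eqP.
under eq_bigr => x _ do under eq_bigr => y _ do rewrite -mulr_sumr.
under eq_bigr => x _ do rewrite -mulr_sumr.
rewrite -mulr_sumr; congr (_ * _).
rewrite (eq_bigr (fun x : word d => \prod_(i < d) \sum_(b : bool) \sum_(e : bool) f (x i) b e)); last first.
  move=> x _.
  rewrite (eq_bigr (fun y : word d => \prod_(i < d) \sum_(e : bool) f (x i) (y i) e)); last first.
    by move=> y _; rewrite (fact_sum _ (fun i e => f (x i) (y i) e)).
  by rewrite (fact_sum _ (fun i b => \sum_(e : bool) f (x i) b e)).
rewrite (fact_sum _ (fun i a => \sum_(b : bool) \sum_(e : bool) f a b e)).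
rewrite prodr_const card_ord; congr (_ ^+ _).
rewrite !big_bool /f /= expRN; field.
by rewrite gt_eqF // expR_gt0.
Qed.

Lemma M_bound (p lam : R) : 0 <= p -> p <= 1 -> 0 <= lam -> lam <= 1/25 ->
  p + (1 - p) * (expR lam ^+ 2 + expR (- lam) ^+ 2) / 2 <=
  expR ((1 - p) / 2 * ((41/20) * lam) ^+ 2).
Proof.
move=> hp0 hp1 hl0 hl1.
set e := expR lam; set e' := expR (- lam).
have ee : e * e' = 1 by rewrite /e /e' expRxMexpNx_1.
have he' : 1 - lam <= e'.
  by have := expR_ge1Dx (- lam); rewrite /e'; lra.
have he : 1 + lam <= e by have := expR_ge1Dx lam; rewrite /e; lra.
have e'0 : 0 < e' by exact: expR_gt0.
have hinv : e <= (1 - lam)^-1.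
  have -> : e = e'^-1 by rewrite /e /e' expRN invrK.
  rewrite lef_pV2 // posrE; lra.
have hinv2 : (1 - lam)^-1 <= 1 + (21/20) * lam.
  rewrite -[X in X <= _]mul1r ler_pdivrMr; last lra.
  nra.
have he'1 : e' <= 1 by rewrite /e' expR_le1; lra.
set D := e - e'.
have D0 : 0 <= D by rewrite /D; lra.
have hE := le_trans hinv hinv2.
have D1 : D <= (41/20) * lam.
  rewrite /D. lra.
have DD : D ^+ 2 <= ((41/20) * lam) ^+ 2.
  by rewrite lerXn2r // nnegrE; lra.
have -> : p + (1 - p) * (e ^+ 2 + e' ^+ 2) / 2 = 1 + (1 - p) / 2 * D ^+ 2.
  rewrite /D. have : e ^+ 2 + e' ^+ 2 = (e - e') ^+ 2 + 2 * (e * e') by ring.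
  by move=> ->; rewrite ee; field.
have H1 : (1-p)/2 * D^+2 <= (1-p)/2 * ((41/20)*lam)^+2.
  by apply: ler_wpM2l => //; lra.
have := expR_ge1Dx ((1 - p) / 2 * (41 / 20 * lam) ^+ 2). lra.
Qed.

Lemma ln_le_sqrt (y : R) : 0 < y -> ln y < 2 * Num.sqrt y.
Proof.
move=> y0.
have s0 : 0 < Num.sqrt y by rewrite sqrtr_gt0.
have : y = Num.sqrt y * Num.sqrt y by rewrite -expr2 sqr_sqrtr // ltW.
move=> {1}->; rewrite lnM ?posrE //.
have := ln_sublinear s0; lra.
Qed.
End H.

Theorem lemma4p3 (R : realType) (a mu1 : R) (ha : 1 < a) (hmu0 : 0 < mu1) (hmu1 : mu1 <= 1) :
  exists alpha1 : R, 0 < alpha1 /\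
  exists N : nat, forall n d : nat, (N <= n)%N -> (n <= d)%N ->
    let rho := @rho_of R a mu1 n d in
    @prob_XXY R d ((1 - rho) / 2)
      (fun x x' y => (maxn (dH x y) (dH x' y))%:R <= d%:R / 2 - 3 * rho * d%:R / 8)
    <= (mu1 * n%:R) `^ (- (1 + alpha1)).
Proof.
have la0 : 0 < ln a by apply: ln_gt0.
have lm0 : ln mu1 <= 0 by apply: ln_le0.
exists (1/50); split; first lra.
set Y : R := (200*400) + ln a - 2 * ln mu1.
exists (Num.truncn (expR Y)).+1 => n d hn hd /=.
set rho := @rho_of R a mu1 n d.
have hnR : expR Y < n%:R.
  apply: lt_le_trans (truncnS_gt _) _; by rewrite ler_nat.
have n0 : 0 < n%:R :> R by apply: lt_trans hnR; exact: expR_gt0.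
set y := ln (n%:R : R).
have hy : Y < y by rewrite /y -{1}(expRK Y) ltr_ln ?posrE ?expR_gt0.
have ny : expR y = n%:R by rewrite /y lnK // posrE.
have hn2 : 1 + y ^+ 2 / 2 <= n%:R.
  rewrite -ny; have := expR_ge1Dxn 1 (_ : 0 <= y); apply; rewrite /Y in hy; lra.
have hdn : (n%:R : R) <= d%:R by rewrite ler_nat.
have y0 : 0 < y by rewrite /Y in hy; lra.
set s := Num.sqrt y.
have s0 : 0 <= s by apply: sqrtr_ge0.
have ss : s ^+ 2 = y by rewrite sqr_sqrtr // ltW.
have s104 : 104 <= s.
  rewrite /Y in hy; nra.
have lny := @ln_le_sqrt R y y0; rewrite -/y in lny; rewrite -/s in lny.
have lny0 : 0 <= ln y by apply: ln_ge0; rewrite /Y in hy; lra.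
have e1 : ln (a * mu1 * n%:R) = ln a + ln mu1 + y.
  by rewrite !lnM ?posrE // ?mulr_gt0 //; lra.
have e2 : ln (mu1 * n%:R) = ln mu1 + y by rewrite lnM ?posrE.
set L := 2 * ln (a * mu1 * n%:R) - ln (ln n%:R).
have eL : L = 2 * (ln a + ln mu1 + y) - ln y by rewrite /L e1.
have L0 : 0 <= L.
  have := ln_sublinear y0; rewrite /Y in hy; lra.
have d0 : (0 : R) < d%:R by lra.
have Lsmall : (100*100) * L <= d%:R.
  have : (200*400) * y <= y ^+ 2 by rewrite expr2; apply: ler_wpM2r; rewrite /Y in hy; lra.
  rewrite /Y in hy; lra.
have hrho : rho = Num.sqrt (L / d%:R) by [].
have r0 : 0 <= rho by rewrite hrho sqrtr_ge0.
have r2 : rho ^+ 2 = L / d%:R by rewrite hrho sqr_sqrtr // divr_ge0 // ltW.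
have r2d : rho ^+ 2 * d%:R = L by rewrite r2 divfK // gt_eqF.
have r1 : rho <= 1/100.
  have : rho ^+ 2 <= 1 / (100*100).
    rewrite r2 ler_pdivrMr //; lra.
  nra.
set lam := 2 * rho / 3.
apply: le_trans (chernoff _ _ _ lam (rho ^+ 2 * d%:R) _ _ _ _ _) _.
- lra.
- lra.
- rewrite /lam; lra.
- move=> x z y' /=.
  have h1 := leq_maxl (dH x y') (dH z y').
  have h2 := leq_maxr (dH x y') (dH z y').
  rewrite -(ler_nat R) in h1; rewrite -(ler_nat R) in h2.
  move=> hE.
  have : (3/2) * rho * d%:R <= (d%:R - 2 * (dH x y')%:R + (d%:R - 2 * (dH z y')%:R)).
    lra.
  move=> h3; rewrite /lam.
  have : 0 <= 2 * rho / 3 by lra.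
  nra.
have hM := @M_bound R ((1 - rho) / 2) lam.
rewrite /lam in hM.
have {}hM := hM ltac:(lra) ltac:(lra) ltac:(lra) ltac:(lra).
apply: le_trans.
  apply: ler_wpM2l; first exact: expR_ge0.
  apply: lerXn2r; last exact: hM.
    rewrite nnegrE; apply: addr_ge0; first lra.
    apply: divr_ge0; last lra.
    apply: mulr_ge0; first lra.
    by apply: addr_ge0; apply: exprn_ge0; apply: expR_ge0.
  by rewrite nnegrE expR_ge0.
rewrite -expRM_natl -expRD.
rewrite /powR (negbTE (_ : mu1 * n%:R != 0)); last by rewrite mulf_neq0 // gt_eqF.
rewrite ler_expR e2.
set B := (1 - (1 - rho) / 2) / 2 * (41 / 20 * (2 * rho / 3)) ^+ 2.
have hB : B <= (12/25) * rho ^+ 2.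
  rewrite /B; nra.
have : d%:R * B <= (12/25) * L.
  rewrite -r2d; nra.
have : 26 * ln y <= ln mu1 + y.
  have : 104 * s <= y by rewrite -ss expr2; nra.
  rewrite /Y in hy; lra.
rewrite eL in L0 *; lra.
Qed.
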